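(* Let $(X,d,\mu)$ be a metric space with a Borel measure $\mu$ and fix $x\in X$. Suppose $\mathrm{vol}_\delta^x(l)<\infty$ for every $\delta>0$ and $l\in\mathbb N$, and that there is $\delta_0>0$ with $\limsup_{l\to\infty}\frac1l\log\mathrm{vol}_{\delta_0}^x(l)>0$. Then $h_\infty(X)=\infty$.
   Context: For $\delta>0$ a $\delta$-path is a sequence $(x_0,\dots,x_n)$ with $d(x_{i-1},x_i)\le\delta$; the $\delta$-component $[x]_\delta$ of $x$ is the set of points connected to $x$ by a $\delta$-path. For $x_0\in X$ and $n\in\mathbb N$, $B_\delta(x_0,n)=\{x_n\in X:\exists\ \delta\text{-path }(x_0,x_1,\dots,x_n)\}$. Define $\mathrm{vol}_\delta^x(l)=\sup_{x_0\in[x]_\delta}\mu(B_\delta(x_0,l))$. Coarse entropy $h_\infty(X)=\lim_{\delta\to\infty}\lim_{R\to\infty}\limsup_{n\to\infty}\frac1n\log s(n,R,\delta,x_0)$, where $s(n,R,\delta,x_0)$ is the supremum of cardinalities of $R$-separated sets of $\delta$-paths of length $n$ starting at $x_0$, paths compared by $\max_i d(x_i,y_i)$. *)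

(* Defs.v *)
From HB Require Import structures.
From mathcomp Require Import all_boot all_order all_algebra.
From mathcomp Require Import all_classical all_reals all_analysis.
Set Implicit Arguments. Unset Strict Implicit. Unset Printing Implicit Defensive.
Import Order.TTheory GRing.Theory Num.Theory.
Import numFieldNormedType.Exports.
Local Open Scope classical_set_scope.
Local Open Scope ring_scope.

Section CoarseDefs.
Variables (R : realType) (X : Type) (d : X -> X -> R).

Definition is_metric : Prop :=
  [/\ forall x y, d x y = 0 <-> x = y,
      forall x y, d x y = d y x &
      forall x y z, d x z <= d x y + d y z].

Definition dopen (A : set X) : Prop :=
  forall x, A x -> exists e : R, 0 < e /\ forall y, d x y < e -> A y.

Definition dpath (delta : R) (n : nat) (x0 : X) (p : 'I_n.+1 -> X) : Prop :=
  p ord0 = x0 /\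
  forall i : nat, (i < n)%N -> d (p (inord i)) (p (inord i.+1)) <= delta.

Definition dcomp (delta : R) (x : X) : set X :=
  [set y | exists n (p : 'I_n.+1 -> X), dpath delta x p /\ p ord_max = y].

Definition dball (delta : R) (x0 : X) (n : nat) : set X :=
  [set y | exists p : 'I_n.+1 -> X, dpath delta x0 p /\ p ord_max = y].

Definition pdist (n : nat) (p q : 'I_n.+1 -> X) : R :=
  \big[Num.max/0]_(i < n.+1) d (p i) (q i).

(* s(n, Rs, delta, x0): supremum of cardinalities of Rs-separated sets of
   delta-paths of length n starting at x0 (a finite such set of cardinality k
   is given by an enumeration P : 'I_k -> paths, pairwise Rs-separated) *)
Definition sep_count (n : nat) (Rs delta : R) (x0 : X) : \bar R :=
  ereal_sup [set (k%:R)%:E | k in [set k : nat |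
    exists P : 'I_k -> ('I_n.+1 -> X),
      (forall i, dpath delta x0 (P i)) /\
      (forall i j, i != j -> Rs < pdist (P i) (P j))]].

End CoarseDefs.

Definition elog (R : realType) (x : \bar R) : \bar R :=
  match x with
  | r%:E => if (0 < r)%R then (ln r)%:E else -oo
  | +oo => +oo
  | -oo => -oo
  end%E.

Definition vol (R : realType) (dsp : measure_display) (X : measurableType dsp)
  (d : X -> X -> R) (mu : {measure set X -> \bar R}) (delta : R) (x : X)
  (l : nat) : \bar R :=
  ereal_sup [set mu (dball d delta x0 l) | x0 in dcomp d delta x].

Definition coarse_entropy (R : realType) (X : Type) (d : X -> X -> R) (x0 : X)
  : \bar R :=
  lim ((lim ((limn_esup (fun n : nat =>
          ((n%:R)^-1)%:E * elog (sep_count d n Rs delta x0))%E)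
       @[Rs --> +oo])) @[delta --> +oo]).

(* Main.v *)
Require Import Defs.
From HB Require Import structures.
From mathcomp Require Import all_boot all_order all_algebra.
From mathcomp Require Import all_classical all_reals all_analysis.
Import Order.TTheory GRing.Theory Num.Theory.
Local Open Scope classical_set_scope.
Local Open Scope ring_scope.
From mathcomp Require Import zify ring lra.
Set Implicit Arguments. Unset Strict Implicit. Unset Printing Implicit Defensive.

Section Paths.
Variables (R : realType) (X : Type) (d : X -> X -> R).
Hypothesis hm : is_metric d.

Lemma d0 x : d x x = 0.
Proof. by case: hm => h _ _; apply/h. Qed.
Lemma dsym x y : d x y = d y x.
Proof. by case: hm. Qed.
Lemma dtri x y z : d x z <= d x y + d y z.
Proof. by case: hm. Qed.
Lemma dge0 x y : 0 <= d x y.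
Proof.
have := dtri x y x; rewrite d0 (dsym y x) => h.
have : 0 <= 2 * d x y by lra. by rewrite pmulr_rge0.
Qed.

Definition npath (delta : R) (n : nat) (x0 : X) (f : nat -> X) :=
  f 0%N = x0 /\ forall i, (i < n)%N -> d (f i) (f i.+1) <= delta.

Definition toI n (f : nat -> X) : 'I_n.+1 -> X := fun i => f i.
Arguments toI : clear implicits.

Lemma npath_dpath delta n x0 f : npath delta n x0 f -> dpath d delta x0 (toI n f).
Proof.
move=> [f0 fs]; split => [//|i lin].
rewrite /toI !inordK //; first exact: fs.
by apply: leq_trans lin _.
Qed.

Lemma dpath_npath delta n x0 (p : 'I_n.+1 -> X) : dpath d delta x0 p ->
  npath delta n x0 (fun i => p (inord i)).
Proof.
move=> [p0 ps]; split => //.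
by rewrite -p0; congr p; apply/val_inj; rewrite /= inordK.
Qed.

Lemma toI_inord n (p : 'I_n.+1 -> X) : toI n (fun i => p (inord i)) = p.
Proof. by apply: funext => i; rewrite /toI inord_val. Qed.

Lemma dballP delta x0 n y :
  dball d delta x0 n y <-> exists f, npath delta n x0 f /\ f n = y.
Proof.
split.
  move=> [p [dp py]]; exists (fun i => p (inord i)); split.
    exact: dpath_npath.
  by rewrite -py; congr p; apply/val_inj; rewrite /= inordK.
move=> [f [nf fy]]; exists (toI n f); split; first exact: npath_dpath.
by [].
Qed.

Lemma dcompP delta x0 y :
  Defs.dcomp d delta x0 y <-> exists n f, npath delta n x0 f /\ f n = y.
Proof.
split.
  move=> [n [p [dp py]]]; exists n.
  by apply/dballP; exists p.
move=> [n /dballP [p hp]]; by exists n, p.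
Qed.

Lemma npath_mono delta delta' n x0 f : delta <= delta' ->
  npath delta n x0 f -> npath delta' n x0 f.
Proof. move=> dd [f0 fs]; split => // i /fs h; exact: le_trans h dd. Qed.

Definition catp N (f g : nat -> X) i := if (i <= N)%N then f i else g (i - N)%N.

Lemma catp_npath delta N N' x0 f g :
  npath delta N x0 f -> npath delta N' (f N) g ->
  npath delta (N + N') x0 (catp N f g).
Proof.
move=> [f0 fs] [g0 gs]; split; first by rewrite /catp leq0n.
move=> i lin; rewrite /catp.
case: ifP => h1; case: ifP => h2.
- by apply: fs; lia.
- have iN : i = N by lia.
  subst i; rewrite subSnn -g0.
  apply: gs; lia.
- exfalso; lia.
- have -> : (i.+1 - N = (i - N).+1)%N by lia.
  apply: gs; lia.
Qed.

Lemma catp_end N N' f g : g 0%N = f N -> catp N f g (N + N') = g N'.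
Proof.
move=> g0; rewrite /catp; case: ifP => h.
  have -> : N' = 0%N by lia.
  by rewrite addn0.
by rewrite addKn.
Qed.

Lemma catp_left N f g i : (i <= N)%N -> catp N f g i = f i.
Proof. by rewrite /catp => ->. Qed.



Definition retp L (g : nat -> X) i := if (i <= L)%N then g i else g (L + L - i)%N.

Lemma retp_npath delta L y g : npath delta L y g -> npath delta (L + L) y (retp L g).
Proof.
move=> [g0 gs]; split; first by rewrite /retp leq0n.
move=> i lin; rewrite /retp.
case: ifP => h1; case: ifP => h2.
- by apply: gs; lia.
- have iN : i = L by lia.
  subst i; rewrite dsym.
  have -> : (L + L - L.+1 = L.-1)%N by lia.
  have -> : g L = g (L.-1).+1 by congr g; lia.
  apply: gs; lia.
- exfalso; lia.
- rewrite dsym.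
  have -> : (L + L - i = (L + L - i.+1).+1)%N by lia.
  apply: gs; lia.
Qed.

Lemma retp_end L g : retp L g (L + L) = g 0%N.
Proof.
rewrite /retp; case: ifP => h; last by rewrite subnn.
by congr g; lia.
Qed.

Lemma retp_left L g i : (i <= L)%N -> retp L g i = g i.
Proof. by rewrite /retp => ->. Qed.

Definition padp n (f : nat -> X) i := f (minn i n).

Lemma padp_npath delta n t x0 f : 0 <= delta -> npath delta n x0 f ->
  npath delta (n + t) x0 (padp n f).
Proof.
move=> dp [f0 fs]; split; first by rewrite /padp min0n.
move=> i _; rewrite /padp.
case: (boolP (i < n)%N) => h.
  have -> : minn i n = i by lia.
  have -> : minn i.+1 n = i.+1 by lia.
  exact: fs.
have -> : minn i n = n by lia.
have -> : minn i.+1 n = n by lia.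
by rewrite d0.
Qed.

Lemma padp_left n f i : (i <= n)%N -> padp n f i = f i.
Proof. by rewrite /padp => h; congr f; lia. Qed.

End Paths.
Arguments toI {X} n f _.

Section Fam.
Variables (R : realType) (X : Type) (d : X -> X -> R).
Hypothesis hm : is_metric d.

Definition SepFam n Rs delta x0 K := exists P : 'I_K -> ('I_n.+1 -> X),
  (forall i, dpath d delta x0 (P i)) /\
  (forall i j, i != j -> Rs < pdist d (P i) (P j)).

Lemma sep_count_ge n Rs delta x0 K : SepFam n Rs delta x0 K ->
  ((K%:R)%:E <= sep_count d n Rs delta x0)%E.
Proof. by move=> h; apply: ereal_sup_ubound; exists K. Qed.

Lemma pdist_ge n (p q : 'I_n.+1 -> X) i : d (p i) (q i) <= pdist d p q.
Proof. exact: le_bigmax. Qed.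

Lemma pdist_sym n (p q : 'I_n.+1 -> X) : pdist d p q = pdist d q p.
Proof. by apply: eq_bigr => i _; rewrite (dsym hm). Qed.

Lemma pdist_lt n (p q : 'I_n.+1 -> X) Rs : 0 <= Rs -> Rs < pdist d p q ->
  exists i, Rs < d (p i) (q i).
Proof.
move=> R0 h; apply: contrapT => hn.
have : pdist d p q <= Rs.
  apply: bigmax_le => // i _.
  by rewrite leNgt; apply/negP => hi; apply: hn; exists i.
by rewrite leNgt h.
Qed.

Definition sepN n Rs (f g : nat -> X) := exists t, (t <= n)%N /\ Rs < d (f t) (g t).

Lemma fam_fintype (T : finType) n Rs delta x0 (P : T -> nat -> X) :
  (forall a, npath d delta n x0 (P a)) ->
  (forall a b, a != b -> sepN n Rs (P a) (P b)) ->
  SepFam n Rs delta x0 #|T|.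
Proof.
move=> hp hs.
exists (fun i => toI n (P (enum_val i))); split.
  by move=> i; apply: npath_dpath.
move=> i j ij.
have : enum_val i != enum_val j by apply: contra ij => /eqP /enum_val_inj ->.
move=> /hs [t [tn ht]].
apply: (lt_le_trans ht).
have := pdist_ge (toI n (P (enum_val i))) (toI n (P (enum_val j))) (inord t).
by rewrite /toI inordK.
Qed.

Lemma conc_fam m L K (g : nat -> X) (B : 'I_K -> nat -> X) x y0 Rs delta :
  npath d delta m x g -> g m = y0 ->
  (forall b, npath d delta L y0 (B b)) ->
  (forall a b, a != b -> sepN L Rs (B a) (B b)) ->
  forall j, exists T : finType, #|T| = (K ^ j)%N /\ exists P : T -> nat -> X,
    (forall a, npath d delta (m + (L + L) * j) x (P a)) /\
    (forall a, P a (m + (L + L) * j)%N = y0) /\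
    (forall a b, a != b -> sepN (m + (L + L) * j) Rs (P a) (P b)).
Proof.
move=> hg gm hB sB; elim => [|j [T [cT [P [hP [eP sP]]]]]].
  exists unit; split; first by rewrite card_unit.
  exists (fun=> g); rewrite muln0 addn0; split => //; split => //.
apply: (@ex_intro finType _ (T * 'I_K)%type); split.
  by rewrite card_prod card_ord cT expnSr.
set N := (m + (L + L) * j)%N.
have -> : (m + (L + L) * j.+1 = N + (L + L))%N by rewrite /N mulnS; lia.
have Bs b : B b 0%N = y0 by case: (hB b).
exists (fun ab => catp N (P ab.1) (retp L (B ab.2))); split; [|split].
- move=> [a b] /=; apply: catp_npath => //.
  rewrite eP; apply: retp_npath => //; exact: hB.
- move=> [a b] /=; rewrite catp_end.
    by rewrite retp_end.
  by rewrite retp_left // Bs eP.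
- move=> [a b] [a' b'] /=.
  case: (eqVneq a a') => [<-|aa] ab.
    have bb : b != b' by apply: contra ab => /eqP ->.
    have [t [tL ht]] := sB _ _ bb.
    exists (N + t)%N; split; first lia.
    rewrite !catp_end ?retp_left ?Bs ?eP //.
  have [t [tN ht]] := sP _ _ aa.
  exists t; split; first lia.
  by rewrite !catp_left //; lia.
Qed.

Lemma pad_count m L K (g : nat -> X) (B : 'I_K -> nat -> X) x y0 Rs delta :
  0 <= delta ->
  npath d delta m x g -> g m = y0 ->
  (forall b, npath d delta L y0 (B b)) ->
  (forall a b, a != b -> sepN L Rs (B a) (B b)) ->
  forall n j, (m + (L + L) * j <= n)%N ->
  (((K ^ j)%N%:R)%:E <= sep_count d n Rs delta x)%E.
Proof.
move=> d0 hg gm hB sB n j hn.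
have [T [cT [P [hP [eP sP]]]]] := conc_fam hg gm hB sB j.
rewrite -cT; apply: sep_count_ge.
set N := (m + (L + L) * j)%N.
have -> : n = (N + (n - N))%N by rewrite subnKC.
apply: (@fam_fintype T _ _ _ _ (fun a => padp N (P a))).
  by move=> a; apply: padp_npath.
move=> a b ab; have [t [tN ht]] := sP _ _ ab.
exists t; split; first lia.
by rewrite !padp_left.
Qed.

End Fam.

Section Cover.
Variables (R : realType) (dsp : measure_display) (X : measurableType dsp)
  (d : X -> X -> R) (mu : {measure set X -> \bar R}) (x : X).
Hypothesis hm : is_metric d.
Hypothesis hmeas : forall (delta : R) (x0 : X) (l : nat), 0 < delta ->
     measurable (dball d delta x0 l).
Hypothesis hfin : forall (delta : R) (l : nat), 0 < delta ->
  (vol d mu delta x l < +oo)%E.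

Lemma comp_refl delta : 0 <= delta -> Defs.dcomp d delta x x.
Proof.
move=> dp; apply/dcompP; exists 0%N, (fun=> x); split => //.
Qed.

Lemma mu_le_vol delta y l : Defs.dcomp d delta x y ->
  (mu (dball d delta y l) <= vol d mu delta x l)%E.
Proof. by move=> hy; apply: ereal_sup_ubound; exists y. Qed.

Lemma vol_fin delta l : 0 < delta -> exists v : R, 0 <= v /\ vol d mu delta x l = v%:E.
Proof.
move=> dp.
have h0 : (0 <= vol d mu delta x l)%E.
  apply: le_trans (mu_le_vol l (comp_refl (ltW dp))); exact: measure_ge0.
have := hfin l dp.
case E: (vol d mu delta x l) h0 => [v| |] //= h0 _.
by exists v; split.
Qed.

Lemma comp_trans delta y L f : Defs.dcomp d delta x y -> npath d delta L y f ->
  Defs.dcomp d delta x (f L).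
Proof.
move=> /dcompP [m [g [hg gm]]] hf.
apply/dcompP; exists (m + L)%N, (catp m g f); split.
  by apply: catp_npath => //; rewrite gm.
by rewrite catp_end //; case: hf => -> _.
Qed.

Lemma fam_fintypeI (T : finType) n Rs delta x0 (P : T -> 'I_n.+1 -> X) :
  (forall a, dpath d delta x0 (P a)) ->
  (forall a b, a != b -> Rs < pdist d (P a) (P b)) ->
  SepFam d n Rs delta x0 #|T|.
Proof.
move=> hp hs; exists (fun i => P (enum_val i)); split => // i j ij.
by apply: hs; apply: contra ij => /eqP /enum_val_inj ->.
Qed.

Lemma cover delta Rs y0 L v : 0 < delta -> delta <= Rs ->
  Defs.dcomp d delta x y0 -> 0 <= v -> vol d mu Rs x 1 = v%:E ->
  exists K (B : 'I_K -> nat -> X),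
    (forall b, npath d delta L y0 (B b)) /\
    (forall a b, a != b -> sepN d L Rs (B a) (B b)) /\
    (mu (dball d delta y0 L) <= (K%:R * (v + 1))%:E)%E.
Proof.
move=> dp dR hy0 v0 hv.
have Rp : 0 < Rs by apply: lt_le_trans dR.
have conv K : SepFam d L Rs delta y0 K -> exists B : 'I_K -> nat -> X,
    (forall b, npath d delta L y0 (B b)) /\
    (forall a b, a != b -> sepN d L Rs (B a) (B b)).
  move=> [P [hP sP]]; exists (fun b t => P b (inord t)); split.
    by move=> b; apply: dpath_npath.
  move=> a b ab; have [i hi] := pdist_lt (ltW Rp) (sP _ _ ab).
  by exists i; split; [rewrite -ltnS|rewrite !inord_val].
have [w [w0 hw]] := vol_fin L dp.
have muB : (mu (dball d delta y0 L) <= w%:E)%E by rewrite -hw; apply: mu_le_vol.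
have [unb|bnd] := pselect (forall N, exists K, (N <= K)%N /\ SepFam d L Rs delta y0 K).
  have [K [NK hK]] := unb (Num.Def.trunc w).+1.
  have [B [hB sB]] := conv K hK.
  exists K, B; split => //; split => //.
  apply: le_trans muB _; rewrite lee_fin.
  have : w < K%:R by apply: lt_le_trans (truncnS_gt w) _; rewrite ler_nat.
  move=> wK; have : K%:R <= K%:R * (v + 1) :> R.
    have K0 : (0:R) <= K%:R by []. nra.
  by move=> h; apply: le_trans h; apply: ltW.
have [N hN] : exists N, forall K, SepFam d L Rs delta y0 K -> (K <= N)%N.
  apply: contrapT => hn; apply: bnd => N.
  apply: contrapT => hn2; apply: hn; exists N => K hK.
  case: (leqP K N) => // NK; exfalso; apply: hn2; exists K; split => //.
  exact: ltnW.
pose Pb K := `[< SepFam d L Rs delta y0 K >].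
have ex0 : exists K, Pb K.
  exists 0%N; apply/asboolP; exists (fun i => toI L (fun=> y0)); split.
    by case.
  by case.
have ub : forall K, Pb K -> (K <= N)%N by move=> K /asboolP; apply: hN.
case: (ex_maxnP ex0 ub) => K /asboolP hK Kmax.
have hK' := hK.
move: hK => [P [hP sP]].
have [B [hB sB]] := conv K hK'.
exists K, B; split => //; split => //.
pose F (k : nat) : set X := match @insub _ (fun k => k < K)%N 'I_K k with
  | Some b => dball d Rs (P b ord_max) 1 | None => set0 end.
have FE (b : 'I_K) : F b = dball d Rs (P b ord_max) 1 by rewrite /F valK.
have Fm k : measurable (F k).
  by rewrite /F; case: insub => [b|]; [exact: hmeas|exact: measurable0].
have Fle k : (mu (F k) <= v%:E)%E.
  rewrite /F; case: insub => [b|]; last by rewrite measure0 lee_fin.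
  rewrite -hv; apply: mu_le_vol.
  have := comp_trans hy0 (dpath_npath (hP b)).
  rewrite (_ : P b (inord L) = P b ord_max); last first.
    by congr P; apply/val_inj; rewrite /= inordK.
  move=> /dcompP [m [f [hf fm]]]; apply/dcompP; exists m, f; split => //.
  exact: npath_mono hf.
have sub : dball d delta y0 L `<=` \big[setU/set0]_(k < K) F k.
  move=> y [q [hq qy]].
  have [b hb] : exists b, ~ (Rs < pdist d (P b) q).
    apply: contrapT => hn.
    have hall b : Rs < pdist d (P b) q.
      by apply: contrapT => h; apply: hn; exists b.
    pose Q (o : option 'I_K) := match o with Some b => P b | None => q end.
    have : SepFam d L Rs delta y0 #|{: option 'I_K}|.
      apply: (fam_fintypeI (P := Q)).
        by case.
      case=> [a|] [b|] //= ab.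
      - by apply: sP; apply: contra ab => /eqP ->.
      - by rewrite pdist_sym.
    rewrite card_option card_ord => /(fun h => Kmax _ (asboolT h)).
    by rewrite ltnn.
  rewrite (bigD1 b) //=; left; rewrite FE.
  apply/dballP; exists (fun t => if t == 0%N then P b ord_max else y); split => //.
  split => // i; rewrite ltnS leqn0 => /eqP -> /=.
  rewrite /= -qy; apply: le_trans (pdist_ge d (P b) q ord_max) _.
  by rewrite leNgt; apply/negP.
apply: (le_trans (@content_subadditive _ _ _ mu _ F K (fun k _ => Fm k) (hmeas y0 L dp) sub)).
apply: (@le_trans _ _ (\sum_(k < K) v%:E)%E); first by apply: lee_sum => k _; exact: Fle.
rewrite sumEFin lee_fin sumr_const card_ord -mulr_natl.
have K0 : (0:R) <= K%:R by []. nra.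
Qed.

End Cover.

Section Ereal.
Variable R : realType.
Local Open Scope ereal_scope.

Lemma limn_esupE (u : (\bar R)^nat) : limn_esup u = ereal_inf (range (esups u)).
Proof. by rewrite limn_esup_lim; apply: (cvg_lim (@ereal_hausdorff R)); exact: cvg_esups_inf. Qed.

Lemma limn_esup_ge (u : (\bar R)^nat) a N :
  (forall n, (N <= n)%N -> a <= u n) -> a <= limn_esup u.
Proof.
move=> h; rewrite limn_esupE; apply/ereal_infP => _ [k _ <-].
apply: le_trans (h (maxn N k) (leq_maxl _ _)) _.
apply: ereal_sup_ubound; exists (maxn N k) => //=.
exact: leq_maxr.
Qed.

Lemma limn_esup_le (u v : (\bar R)^nat) :
  (forall n, u n <= v n) -> limn_esup u <= limn_esup v.
Proof.
move=> h; rewrite !limn_esupE; apply/ereal_infP => _ [k _ <-].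
apply: le_trans (ereal_inf_lbound _) _; first by exists k.
apply: ge_ereal_sup => _ [n kn <-].
apply: le_trans (h n) _; apply: ereal_sup_ubound; by exists n.
Qed.

Lemma limn_esup_pos (w : (\bar R)^nat) : 0 < limn_esup w ->
  exists h : R, (0 < h)%R /\ forall N, exists n, (N <= n)%N /\ h%:E < w n.
Proof.
move=> wp.
have [h [h0 hl]] : exists h : R, (0 < h)%R /\ h%:E < limn_esup w.
  case E: (limn_esup w) wp => [r| |] //= rp.
  - by exists (r / 2)%R; move: rp; rewrite !lte_fin => rp; split; lra.
  - by exists 1%R; split => //; rewrite ltry.
exists h; split => // N.
have : h%:E < esups w N.
  apply: lt_le_trans hl _; rewrite limn_esupE; apply: ereal_inf_lbound.
  by exists N.
move=> /ereal_sup_gt [_ [n Nn <-] hn]; exists n; split => //.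
Qed.

Lemma elog_le (a b : \bar R) : a <= b -> elog a <= elog b.
Proof.
case: a => [a| |]; case: b => [b| |] //=; rewrite ?leNye //.
- rewrite lee_fin => ab; case: ifP => a0; case: ifP => b0 //; rewrite ?leNye //.
    by rewrite lee_fin ler_ln // posrE.
  by move: b0; rewrite (lt_le_trans a0 ab).
- by move=> _; case: ifP; rewrite ?leey ?leNye.
Qed.

Lemma elog_nat (K j : nat) : (0 < K)%N ->
  elog ((K ^ j)%N%:R)%:E = (j%:R * ln (K%:R : R))%:E.
Proof.
move=> K0 /=; rewrite natrX ifT; last by rewrite exprn_gt0 // ltr0n.
by rewrite lnXn ?ltr0n // mulr_natl.
Qed.

End Ereal.

Section Speed.
Variables (R : realType) (X : Type) (d : X -> X -> R).
Hypothesis hm : is_metric d.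

Lemma chain_bound delta l x0 f : npath d delta l x0 f ->
  forall a t, (a + t <= l)%N -> d (f a) (f (a + t)%N) <= t%:R * delta.
Proof.
move=> [_ fs] a; elim => [|t IH] hat.
  by rewrite addn0 (d0 hm) mul0r.
apply: le_trans (dtri hm _ (f (a + t)%N) _) _.
rewrite addnS mulrSr mulrDl mul1r lerD //.
  by apply: IH; lia.
by apply: fs; lia.
Qed.

Lemma speedup delta0 delta k l x0 f : (0 < k)%N -> 0 <= delta0 ->
  k%:R * delta0 <= delta -> npath d delta0 l x0 f ->
  npath d delta (l %/ k).+1 x0 (fun i => f (minn (k * i) l)) /\
  f (minn (k * (l %/ k).+1) l) = f l.
Proof.
move=> k0 d0p kd hf; split; last first.
  congr f; have := ltn_ceil l k0; rewrite mulnC; lia.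
split; first by rewrite muln0 min0n; case: hf.
move=> i _.
set a := minn (k * i) l; set b := minn (k * i.+1) l.
have -> : b = (a + (b - a))%N by rewrite /a /b; lia.
apply: le_trans (chain_bound hf _) _; first by rewrite /a /b; lia.
apply: le_trans kd; apply: ler_wpM2r => //; rewrite ler_nat /a /b; lia.
Qed.

End Speed.

Lemma arith1 (R : realType) (a b c e f : R) : f <= a + b -> 2 * c + b < a ->
  a - c < e -> 0 <= c -> 0 <= b -> f <= 4 * e.
Proof. move=> *; lra. Qed.

Lemma arith2 (R : realType) (p q r : R) : p <= q -> q <= 32 * r -> p / 32 <= r.
Proof. move=> *; lra. Qed.

Lemma nat1 (n m P L : nat) : (P <= n - m)%N -> (m + m + 4 * L <= n)%N -> (m + P <= n)%N.
Proof. lia. Qed.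

Lemma nat2 (n m P L : nat) : (n - m < L + L + (P + P))%N -> (m + m + 4 * L <= n)%N ->
  (n <= 8 * P)%N.
Proof. lia. Qed.

Section MainK.
Variables (R : realType) (dsp : measure_display) (X : measurableType dsp)
  (d : X -> X -> R) (mu : {measure set X -> \bar R}) (x : X).
Hypothesis hm : is_metric d.
Hypothesis hmeas : forall (delta : R) (x0 : X) (l : nat), 0 < delta ->
     measurable (dball d delta x0 l).
Hypothesis hfin : forall (delta : R) (l : nat), 0 < delta ->
  (vol d mu delta x l < +oo)%E.
Variables (delta0 h : R).
Hypothesis d0p : 0 < delta0.
Hypothesis h0 : 0 < h.
Hypothesis hv : forall N, exists l, (N <= l)%N /\ exists x0,
  Defs.dcomp d delta0 x x0 /\ ((expR (h * l%:R))%:E < mu (dball d delta0 x0 l))%E.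

Lemma lemK k delta Rs : (0 < k)%N -> k%:R * delta0 <= delta -> delta <= Rs ->
  ((h * k%:R / 32)%:E <= limn_esup (fun n : nat =>
     ((n%:R)^-1)%:E * elog (sep_count d n Rs delta x)))%E.
Proof.
move=> k0 kd dR.
have k1 : (1 : R) <= k%:R by rewrite ler1n.
have dd : delta0 <= delta by apply: le_trans kd; rewrite ler_peMl // ltW.
have dp : 0 < delta by apply: lt_le_trans dd.
have Rp : 0 < Rs by apply: lt_le_trans dR.
have [v [v0 hv1]] := vol_fin hfin 1 Rp.
set V := v + 1.
have V1 : 1 <= V by rewrite /V lerDr.
have lnV0 : 0 <= ln V by apply: ln_ge0.
have [l [Nl [x0 [hx0 hmu]]]] := hv (Num.Def.trunc (2 * ln V / h + k%:R)).+1.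
have hl : 2 * ln V + h * k%:R < h * l%:R.
  have : 2 * ln V / h + k%:R < l%:R.
    apply: lt_le_trans (truncnS_gt _) _; rewrite ler_nat; exact: Nl.
  rewrite -(ltr_pM2l h0) mulrDr mulrCA mulfV ?mulr1 // gt_eqF //.
set L := (l %/ k).+1.
have hx0' : Defs.dcomp d delta x x0.
  move/dcompP: hx0 => [m [g [hg gm]]]; apply/dcompP; exists m, g; split => //.
  exact: npath_mono hg.
have hBB : (mu (dball d delta0 x0 l) <= mu (dball d delta x0 L))%E.
  apply: le_measure; rewrite ?inE; [exact: hmeas|exact: hmeas|].
  move=> y /dballP [f [hf fy]]; apply/dballP.
  have [sp se] := speedup hm k0 (ltW d0p) kd hf.
  by exists (fun i => f (minn (k * i) l)); split => //; rewrite se.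
have [K [B [hBp [sB hK]]]] := cover hm hmeas hfin L dp dR hx0' v0 hv1.
have hKV : expR (h * l%:R) < K%:R * V.
  rewrite -lte_fin; apply: lt_le_trans hK; exact: lt_le_trans hBB.
have Kp : (0 < K)%N.
  case: K {B hBp sB hK} hKV => // /=; rewrite mul0r => H.
  by have := expR_gt0 (h * l%:R); rewrite ltNge (ltW H).
have Kr1 : (1 : R) <= K%:R by rewrite ler1n.
have lnK : h * l%:R - ln V < ln K%:R.
  have KV0 : 0 < K%:R * V by apply: lt_trans hKV; exact: expR_gt0.
  rewrite ltrBlDr -lnM ?posrE ?ltr0n //; last by apply: lt_le_trans V1.
  by rewrite -[X in X < _]expRK ltr_ln ?posrE ?expR_gt0.
have lnK0 : 0 <= ln (K%:R : R) by apply: ln_ge0.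
have Lk : (L * k <= l + k)%N by rewrite /L mulSn addnC leq_add2r; exact: leq_divM.
have Lkr : L%:R * k%:R <= l%:R + k%:R :> R by rewrite -natrM -natrD ler_nat.
have key : h * k%:R * L%:R <= 4 * ln K%:R.
  have : h * (L%:R * k%:R) <= h * (l%:R + k%:R) by rewrite ler_pM2l.
  rewrite mulrDr (mulrC (L%:R)) mulrA => H.
  apply: arith1 H hl lnK lnV0 _; exact: mulr_ge0 (ltW h0) _.
move/dcompP: hx0' => [m [g [hg gm]]].
apply: (@limn_esup_ge _ _ _ (m + m + 4 * L)%N) => n hn.
set j := ((n - m) %/ (L + L))%N.
have L0 : (0 < L + L)%N by rewrite /L addSn.
have hj1 : (m + (L + L) * j <= n)%N.
  have := leq_divM (n - m) (L + L); rewrite -/j mulnC => H; exact: nat1 H hn.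
have hj2 : (n <= 8 * (L * j))%N.
  have := ltn_ceil (n - m) L0; rewrite -/j mulSn (mulnC j) mulnDl => H.
  exact: nat2 H hn.
have hsep := pad_count hm (ltW dp) hg gm hBp sB hj1.
have n0 : (0 < n)%N by apply: leq_trans hn; rewrite addn_gt0 muln_gt0 /L orbT.
apply: le_trans (_ : ((n%:R)^-1)%:E * elog (((K ^ j)%N%:R)%:E) <= _)%E; last first.
  by apply: lee_wpmul2l; [rewrite lee_fin invr_ge0|apply: elog_le].
rewrite elog_nat // -EFinM lee_fin [_^-1 * _]mulrC ler_pdivlMr ?ltr0n //.
have hj2r : n%:R <= 8 * (L%:R * j%:R) :> R.
  by move: hj2; rewrite -(ler_nat R) !natrM.
have : 8 * (j%:R * (4 * ln K%:R)) >= 8 * (j%:R * (h * k%:R * L%:R)) :> R.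
  by rewrite ler_pM2l // ler_wpM2l.
have hk0 : 0 <= h * k%:R by apply: mulr_ge0; [apply: ltW|].
have : h * k%:R * n%:R <= h * k%:R * (8 * (L%:R * j%:R)) by rewrite ler_wpM2l.
have -> : h * k%:R / 32 * n%:R = (h * k%:R * n%:R) / 32 by ring.
have -> : h * k%:R * (8 * (L%:R * j%:R)) = 8 * (j%:R * (h * k%:R * L%:R)) by ring.
have -> : 8 * (j%:R * (4 * ln K%:R)) = 32 * (j%:R * ln K%:R) :> R by ring.
move=> H1 H2; exact: arith2 H1 H2.
Qed.

End MainK.

Lemma arith3 (R : realType) (A h k : R) : 0 < h -> 32 * A / h < k -> A <= h * k / 32.
Proof. move=> h0; rewrite ltr_pdivrMr // => H; lra. Qed.

Definition Fq (R : realType) (X : Type) (d : X -> X -> R) (x : X) (delta Rs : R) :=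
  limn_esup (fun n : nat => ((n%:R)^-1)%:E * elog (sep_count d n Rs delta x))%E.

Lemma Fq_mono (R : realType) (X : Type) (d : X -> X -> R) (x : X) (delta : R) :
  {homo Fq d x delta : a b / a <= b >-> (b <= a)%E}.
Proof.
move=> a b ab; apply: limn_esup_le => n.
apply: lee_wpmul2l; first by rewrite lee_fin invr_ge0.
apply: elog_le; apply: ereal_sup_le.
move=> _ [K [P [hP sP]] <-]; exists K => //; exists P; split => // i j ij.
exact: le_lt_trans ab (sP _ _ ij).
Qed.

Unset Implicit Arguments.
Theorem mainTheorem13 (R : realType) (dsp : measure_display)
  (X : measurableType dsp) (d : X -> X -> R)
  (mu : {measure set X -> \bar R}) (x : X) :
  is_metric d ->
  (* mu is a Borel measure: the measurable sets are the Borel sets of d *)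
  (@measurable dsp X = <<s [set A | dopen d A] >>) ->
  (* the sets B_delta(x0, l) are Borel (implicit in the paper) *)
  (forall (delta : R) (x0 : X) (l : nat), 0 < delta ->
     measurable (dball d delta x0 l)) ->
  (forall (delta : R) (l : nat), 0 < delta -> (vol d mu delta x l < +oo)%E) ->
  (exists delta0 : R, 0 < delta0 /\
     (0 < limn_esup (fun l : nat => ((l%:R)^-1)%:E * elog (vol d mu delta0 x l)))%E) ->
  coarse_entropy d x = +oo%E.
Proof.
move=> hm _ hmeas hfin [d0 [d0p hlim]].
have [h [h0 hw]] := limn_esup_pos hlim.
have hv : forall N, exists l, (N <= l)%N /\ exists x0,
    Defs.dcomp d d0 x x0 /\ ((expR (h * l%:R))%:E < mu (dball d d0 x0 l))%E.
  move=> N; have [n [Nn hn]] := hw (maxn N 1).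
  exists n; split; first exact: leq_trans (leq_maxl _ _) Nn.
  have n0 : (0 < n)%N by apply: leq_trans (leq_maxr _ _) Nn.
  have [r [r0 hr]] := vol_fin hfin n d0p.
  move: hn; rewrite hr /=; case: ifP => rp; last first.
    by rewrite mulrNy gtr0_sg ?invr_gt0 ?ltr0n // mul1e.
  rewrite -EFinM lte_fin [_^-1 * _]mulrC ltr_pdivlMr ?ltr0n // => hn.
  have : ((expR (h * n%:R))%:E < vol d mu d0 x n)%E.
    by rewrite hr lte_fin -[X in _ < X]lnK ?posrE // ltr_expR.
  move=> /ereal_sup_gt [_ [x0 hx0 <-] hlt]; exists x0; split => //.
have Glim delta : lim (Fq d x delta @ +oo%R) = ereal_inf (range (Fq d x delta)).
  apply: (cvg_lim (@ereal_hausdorff R)); apply: nonincreasing_cvge.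
  exact: Fq_mono.
rewrite /coarse_entropy; apply: (cvg_lim (@ereal_hausdorff R)).
apply/cvgeyPge => A.
pose k := (Num.Def.trunc (32 * A / h)).+1.
have k0 : (0 < k)%N by [].
apply: filterS (nbhs_pinfty_ge (r := k%:R * d0) _); last by rewrite num_real.
move=> delta kd /=.
change (A%:E <= lim (Fq d x delta @ +oo%R))%E.
rewrite Glim; apply/ereal_infP => _ [Rs _ <-].
have Ak : (A%:E <= (h * k%:R / 32)%:E)%E.
  rewrite lee_fin; have := truncnS_gt (32 * A / h); rewrite -/k => H.
  exact: arith3 h0 H.
apply: le_trans Ak _.
case: (leP delta Rs) => dR.
  exact: (lemK hm hmeas hfin d0p h0 hv k0 kd dR).
apply: le_trans (Fq_mono d x delta (ltW dR)).
exact: (lemK hm hmeas hfin d0p h0 hv k0 kd (le_refl delta)).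
Qed.
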